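(* Suppose $X$ has a $\chi^2$ distribution with $\ell$ degrees of freedom, where $\ell\ge3$. Then for every $0<t<\ell-2$, \[ P(X\le t)\le P(X\ge 2\ell-4-t). \] *)

(* Defs.v *)
From HB Require Import structures.
From mathcomp Require Import all_boot all_order all_algebra.
From mathcomp Require Import all_classical all_reals all_analysis.
Set Implicit Arguments. Unset Strict Implicit. Unset Printing Implicit Defensive.
Import Order.TTheory GRing.Theory Num.Theory.
Local Open Scope classical_set_scope.
Local Open Scope ring_scope.

Definition chi2_kernel {R : realType} (l : nat) (x : R) : R :=
  if 0 < x then x `^ (l%:R / 2 - 1) * expR (- x / 2) else 0.

(* Normalizing constant: int_0^oo x^(l/2-1) e^(-x/2) dx  (= 2^(l/2) Gamma(l/2)). *)
Definition chi2_const {R : realType} (l : nat) : R :=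
  fine (\int[lebesgue_measure]_(x in [set: R]) (chi2_kernel l x)%:E)%E.

Definition chi2_pdf {R : realType} (l : nat) (x : R) : R :=
  chi2_kernel l x / chi2_const l.

Definition has_chi2_law {d} {T : measurableType d} {R : realType}
  (P : probability T R) (X : {RV P >-> R}) (l : nat) : Prop :=
  forall A : set R, measurable A ->
    P (X @^-1` A) = (\int[lebesgue_measure]_(x in A) (chi2_pdf l x)%:E)%E.

(* Main.v *)
Require Import Defs.
From HB Require Import structures.
From mathcomp Require Import all_boot all_order all_algebra.
From mathcomp Require Import all_classical all_reals all_analysis.
From mathcomp Require Import measurable_realfun.
From mathcomp Require Import ring lra.
Import Order.TTheory GRing.Theory Num.Theory.
Local Open Scope classical_set_scope.
Local Open Scope ring_scope.

Section Aux.
Context {R : realType}.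
Let f (u : R) := (1 + u) * expR (- u) - (1 - u) * expR u.
Lemma df (x : R) : is_derive x 1 f (x * (expR x - expR (- x))).
Proof.
rewrite /f.
apply: is_derive_eq.
rewrite /GRing.scale/=.
ring.
Qed.
Lemma key (u : R) : 0 <= u -> (1 - u) * expR u <= (1 + u) * expR (- u).
Proof.
move=> u0; rewrite -subr_ge0.
have -> : 0 = f 0 by rewrite /f oppr0 expR0; ring.
have h1 : forall x, x \in `]0, +oo[%R -> derivable f x 1.
  move=> x _; exact: (@ex_derive _ _ _ _ _ _ _ (df x)).
have h2 : forall x, x \in `]0, +oo[%R -> 0 <= (f^`())%classic x.
  move=> x; rewrite in_itv/= andbT => x0.
  rewrite derive1E (@derive_val _ _ _ _ _ _ _ (df x)).
  apply: mulr_ge0; first exact: ltW.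
  rewrite subr_ge0 ler_expR; lra.
have h3 : {within `[0, +oo[, continuous f}.
  apply: derivable_within_continuous => x _; exact: (@ex_derive _ _ _ _ _ _ _ (df x)).
exact: (@ger0_derive1_ndecry _ f 0 h1 h2 h3).
Qed.
Lemma kernel_ge0 l (x : R) : 0 <= chi2_kernel l x.
Proof.
rewrite /chi2_kernel; case: ifP => // _.
by apply: mulr_ge0; [exact: powR_ge0 | exact: expR_ge0].
Qed.

Lemma kern_cmp (l : nat) (x : R) : (3 <= l)%N ->
  l%:R - 2 <= x ->
  chi2_kernel l (2 * (l%:R - 2) - x) <= chi2_kernel l x.
Proof.
move=> l3 hx.
set m := l%:R - 2 in hx *.
have m1 : 1 <= m.
  rewrite /m lerBrDr; have : (3%:R <= l%:R :> R) by rewrite ler_nat.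
  by move=> h; apply: le_trans h; rewrite (_ : 1 + 2 = 3%:R :> R)//; lra.
rewrite /chi2_kernel.
case: ifP => [hpos|]; last by move=> _; apply: kernel_ge0.
have xpos : 0 < x by lra.
rewrite xpos.
set s := x - m.
have -> : 2 * m - x = m - s by rewrite /s; ring.
have -> : x = m + s by rewrite /s; ring.
have s0 : 0 <= s by rewrite /s; lra.
have sm : s < m by rewrite /s; lra.
have m0 : 0 < m by lra.
set p := l%:R / 2 - 1.
have pE : p = m / 2 by rewrite /p /m; field.
have p0 : 0 <= p by rewrite pE; apply: divr_ge0; lra.
pose u := s / m.
have u0 : 0 <= u by apply: divr_ge0; lra.
have hk := key u u0.
have step1 : (m - s) * expR (2 * s / m) <= m + s.
  have e : expR (2 * s / m) = expR u * expR u by rewrite -expRD /u; congr expR; field; lra.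
  have eu := expR_gt0 u.
  have : (1 - u) * expR u * (m * expR u) <= (1 + u) * expR (- u) * (m * expR u).
    by apply: ler_wpM2r => //; apply: mulr_ge0; lra.
  have em : expR (- u) * expR u = 1 by rewrite -expRD addNr expR0.
  have -> : m - s = m * (1 - u) by rewrite /u; field; lra.
  have -> : m + s = m * (1 + u) by rewrite /u; field; lra.
  rewrite e.
  move=> h; apply: le_trans (le_trans h _); first by rewrite le_eqVlt; apply/orP; left; apply/eqP; ring.
  rewrite le_eqVlt; apply/orP; left; apply/eqP.
  rewrite -[RHS]mulr1 -em; ring.
have step2 : ((m - s) * expR (2 * s / m)) `^ p <= (m + s) `^ p.
  apply: ge0_ler_powR => //; rewrite nnegrE.
    by apply: mulr_ge0; [lra | exact: expR_ge0].
  lra.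
rewrite powRM in step2; [| lra | exact: expR_ge0].
rewrite -expRM in step2.
have e2 : 2 * s / m * p = s by rewrite pE; field; lra.
rewrite e2 in step2.
have -> : expR (- (m - s) / 2) = expR s * expR (- (m + s) / 2).
  by rewrite -expRD; congr expR; field.
rewrite mulrA; apply: ler_wpM2r => //; exact: expR_ge0.
Qed.
Local Notation mu := (@lebesgue_measure R).

Lemma mrefl (c : R) : measurable_fun [set: R] (fun x : R => c - x).
Proof.
have -> : (fun x : R => c - x) = (cst c \- id)%R by [].
apply: measurable_realfun.measurable_funB; [exact: measurable_cst | exact: measurable_id]. Qed.

Lemma lebesgue_reflect (c : R) (A : set R) : measurable A ->
  pushforward mu (fun x : R => c - x) A = mu A.
Proof.
move=> mA.
have := @lebesgue_measure_unique R
  (@measure_function_pushforward__canonical__measure_function_Measure _ _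
     (measurableTypeR R) (measurableTypeR R) R mu (fun x => c - x) (mrefl c)).
move=> h; apply/esym; apply: (h _ A mA) => {h} /= _ [[a b]] _ <-.
rewrite /pushforward.
have -> : (fun x : R => c - x) @^-1` `]a, b] = `[c - b, c - a[%classic.
  apply/funext => x; apply/propext; rewrite /preimage /= !in_itv /=.
  by split => /andP[h1 h2]; apply/andP; split; lra.
rewrite !lebesgue_measure_itv/= !lte_fin.
have -> : (c - b < c - a) = (a < b) by apply/idP/idP => h; lra.
case: ifP => // _; rewrite -EFinD; congr EFin; ring.
Qed.

Local Open Scope ereal_scope.
Lemma integral_reflect (c : R) (D : set R) (g : R -> \bar R) :
  measurable D -> measurable_fun D g -> (forall x, D x -> 0 <= g x) ->
  \int[mu]_(x in D) g x =
  \int[mu]_(x in (fun x : R => (c - x)%R) @^-1` D) g (c - x)%R.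
Proof.
move=> mD mg g0.
rewrite -(@ge0_integral_pushforward _ _ (measurableTypeR R) (measurableTypeR R) R
   (fun x => c - x)%R (mrefl c) mu D g mD mg); last by move=> y /[!inE]; exact: g0.
have mr := mrefl c.
apply: (@eq_measure_integral _ _ _ _
  (@measure_function_pushforward__canonical__measure_function_Measure _ _
     (measurableTypeR R) (measurableTypeR R) R mu (fun x => c - x)%R mr)) => A mA _.
exact: (esym (lebesgue_reflect c A mA)).
Qed.
Local Close Scope ereal_scope.

Lemma meas_kernel (l : nat) : measurable_fun [set: R] (@chi2_kernel R l).
Proof.
rewrite /chi2_kernel.
apply: measurable_fun_ifT.
- by apply: measurable_fun_ltr; [exact: measurable_cst | exact: measurable_id].
- apply: measurable_funM; first exact: measurable_powR.
  apply: measurableT_comp; first exact: measurable_expR.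
  have -> : (fun x : R => - x / 2) = ( *%R^~ 2^-1) \o -%R by [].
  apply: measurableT_comp; [exact: mulrr_measurable | exact: oppr_measurable].
- exact: measurable_cst.
Qed.

Lemma meas_pdf (l : nat) : measurable_fun [set: R] (@chi2_pdf R l).
Proof.
rewrite /chi2_pdf; apply: measurable_funM; first exact: meas_kernel.
exact: measurable_cst.
Qed.

Lemma pdf_ge0 (l : nat) (x : R) : 0 <= chi2_pdf l x.
Proof.
rewrite /chi2_pdf; apply: divr_ge0; first exact: kernel_ge0.
rewrite /chi2_const; apply: fine_ge0; apply: integral_ge0 => y _.
by rewrite lee_fin; exact: kernel_ge0.
Qed.

End Aux.

Theorem lemma2 (d : measure_display) (T : measurableType d) (R : realType)
  (P : probability T R) (X : {RV P >-> R}) (l : nat) (t : R) :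
  (3 <= l)%N -> has_chi2_law X l ->
  0 < t -> t < l%:R - 2 ->
  (P [set w | (X w <= t)%R] <= P [set w | ((2 * l%:R - 4 - t) <= X w)%R])%E.
Proof.
move=> l3 HX t0 tm.
set m : R := l%:R - 2 in tm.
have -> : 2 * l%:R - 4 - t = 2 * m - t by rewrite /m; ring.
have -> : [set w | X w <= t] = X @^-1` `]-oo, t]%classic.
  by apply/funext => w; rewrite /preimage /= in_itv /=.
have -> : [set w | 2 * m - t <= X w] = X @^-1` `[2 * m - t, +oo[%classic.
  by apply/funext => w; rewrite /preimage /= in_itv /= andbT.
rewrite !HX //.
rewrite (@integral_reflect R (2 * m) _ (fun x => (chi2_pdf l x)%:E)) //; last 2 first.
- by apply/measurable_EFinP; apply: measurable_funTS; exact: meas_pdf.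
- by move=> x _; rewrite lee_fin; exact: pdf_ge0.
have -> : (fun x : R => 2 * m - x) @^-1` `]-oo, t]%classic = `[2 * m - t, +oo[%classic.
  apply/funext => x; apply/propext; rewrite /preimage /= !in_itv /= andbT.
  by split => h; lra.
apply: ge0_le_integral => //.
- by move=> x _; rewrite lee_fin; exact: pdf_ge0.
- apply/measurable_EFinP; apply: measurable_funTS.
  apply: measurableT_comp; first exact: meas_pdf.
  exact: mrefl.
- by apply/measurable_EFinP; apply: measurable_funTS; exact: meas_pdf.
move=> x; rewrite /= in_itv /= andbT => hx.
rewrite lee_fin /chi2_pdf; apply: ler_wpM2r.
  rewrite invr_ge0 /chi2_const; apply: fine_ge0; apply: integral_ge0 => y _.
  by rewrite lee_fin; exact: kernel_ge0.
apply: kern_cmp => //; rewrite -/m; lra.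
Qed.
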